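(* Let $\mathbb{F}\in\{\mathbb{R},\mathbb{C}\}$, let $A_1,A_2,\ldots$ be a sequence of matrices in $\mathbb{F}^{n\times n}$, and let $\mu$ be a matrix norm on $\mathbb{F}^{n\times n}$. Suppose that $\sum_{i=1}^\infty(\max(\mu(A_i),1)-1)$ converges. Then all general products from $A_1,A_2,\ldots$ are bounded: for every permutation $\sigma$ of the positive integers, every integer $p\ge 0$, and every sequence $(C_{p,r})_{r\ge1}$ of general products as defined below, there is a constant $M$ with $\mu(C_{p,r})\le M$ for all $r\ge 1$.
   Context: A matrix norm is a submultiplicative norm on $\mathbb{F}^{n\times n}$. General products: given a permutation $\sigma$ of the positive integers, set $B_i=A_{\sigma(i)}$; for an integer $p\ge0$ and each $r\ge1$, $C_{p,r}$ is a product of the matrices $B_{p+1},\ldots,B_{p+r}$, each used exactly once, taken in some order (the order may be chosen arbitrarily and independently for each $r$). *)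

(* Defs.v *)
From mathcomp Require Import all_boot all_algebra.
From mathcomp Require Import all_classical all_reals all_analysis.
From mathcomp.real_closed Require Import complex.
Import numFieldNormedType.Exports.
Import fingroup.perm GRing.Theory Num.Theory.
Local Open Scope ring_scope.

(* The field F is either R (a realType)
   or its complexification R[i]; absF : F -> R is the absolute value of F
   (normr on R, normc on R[i]).  Matrix norms are real-valued. *)

Definition matrix_norm {R : realType} {F : pzRingType} (absF : F -> R) {n : nat}
    (mu : matrix F n n -> R) : Prop :=
  [/\ forall A, 0 <= mu A,
      forall A, mu A = 0 -> A = 0,
      forall (c : F) A, mu (c *: A) = absF c * mu A,
      forall A B, mu (A + B) <= mu A + mu B
    & forall A B, mu (A *m B) <= mu A * mu B].

(* Product of the r matrices B_{p+1},...,B_{p+r} (0-indexed: B p, ..., B (p+r-1))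
   taken in the order given by tau : perm_of (ordinal r). *)
Definition ordered_product {F : pzRingType} {n : nat} (B : nat -> matrix F n n)
    (p : nat) (r : nat) (tau : perm_of (ordinal r)) : matrix F n n :=
  \big[mulmx/1%:M]_(j < r) B (p + tau j)%N.

(* Conclusion + hypotheses of Proposition 3.1 for a given field F.
   Sequences A_1, A_2, ... are indexed from 0 (A i = A_{i+1}); a permutation
   of the positive integers is a bijection of nat. *)
Definition general_products_bounded {R : realType} {F : pzRingType}
    (absF : F -> R) : Prop :=
  forall (n : nat) (A : nat -> matrix F n n) (mu : matrix F n n -> R),
    matrix_norm absF mu ->
    cvgn (series (fun i => Num.max (mu (A i)) 1 - 1)) ->
    forall (sigma : nat -> nat), bijective sigma ->
    forall (p : nat) (C : nat -> matrix F n n),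
      (forall r : nat, (1 <= r)%N ->
         exists tau : perm_of (ordinal r), C r = ordered_product (fun i => A (sigma i)) p r tau) ->
      exists M : R, forall r : nat, (1 <= r)%N -> mu (C r) <= M.

(* Main.v *)
Require Import Defs.
From mathcomp Require Import all_boot all_algebra.
From mathcomp Require Import all_classical all_reals all_analysis.
From mathcomp.real_closed Require Import complex.
Import numFieldNormedType.Exports.
Import mathcomp.order.order.Order.TTheory.
Import fingroup.perm GRing.Theory Num.Theory.
Local Open Scope ring_scope.

Lemma prod_ge1 (R : realType) (s : seq nat) (P : pred nat) (F : nat -> R) :
  (forall k, 1 <= F k) -> 1 <= \prod_(k <- s | P k) F k.
Proof.
move=> H; apply: (big_ind (fun x => 1 <= x)) => // x y hx hy.
by rewrite -[1]mulr1 ler_pM.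
Qed.

Lemma prod_inj_le (R : realType) (r K : nat) (g : 'I_r -> nat) (F : nat -> R) :
  injective g -> (forall j, (g j < K)%N) -> (forall k, 1 <= F k) ->
  \prod_(j < r) F (g j) <= \prod_(0 <= k < K) F k.
Proof.
move=> ig gK F1.
set s := map g (enum 'I_r).
have us : uniq s by rewrite map_inj_uniq // enum_uniq.
have -> : \prod_(j < r) F (g j) = \prod_(k <- s) F k.
  by rewrite big_map big_enum.
have pe : perm_eq (seq.filter (fun k => k \in s) (index_iota 0 K)) s.
  apply: uniq_perm; first by rewrite seq.filter_uniq // iota_uniq.
    exact: us.
  move=> x; rewrite mem_filter mem_index_iota.
  case xs: (x \in s) => //=.
  move: xs; rewrite /s => /mapP [j _ ->]; exact: gK.
rewrite [X in _ <= X](bigID (fun k => k \in s)) /=.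
have -> : \prod_(k <- index_iota 0 K | k \in s) F k = \prod_(k <- s) F k.
  by rewrite -big_filter (perm_big _ pe).
rewrite ler_peMr //; last exact: prod_ge1.
apply: (big_ind (fun x => 0 <= x)) => // [x y|k _]; first exact: mulr_ge0.
exact: le_trans ler01 (F1 k).
Qed.

Lemma mu_prod (R : realType) (F : pzRingType) (absF : F -> R) (n : nat)
  (mu : matrix F n n -> R) : matrix_norm absF mu ->
  forall r (f : 'I_r -> matrix F n n),
  mu (\big[mulmx/1%:M]_(j < r) f j) <= mu 1%:M * \prod_(j < r) mu (f j).
Proof.
move=> [mu0 _ _ _ muM]; elim=> [|r IH] f.
  by rewrite !big_ord0 mulr1.
rewrite !big_ord_recl; apply: le_trans (muM _ _) _.
rewrite mulrCA; apply: ler_wpM2l => //; exact: IH.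
Qed.

Lemma gpb (R : realType) (F : pzRingType) (absF : F -> R) :
  general_products_bounded absF.
Proof.
move=> n A mu hmu cv sigma bs p C HC.
have hmu' := hmu; case: hmu' => [mu0 _ _ _ muM].
have si : injective sigma := bij_inj bs.
set a := fun i => Num.max (mu (A i)) 1 - 1.
have a0 : forall i, 0 <= a i by move=> i; rewrite /a subr_ge0 le_max lexx orbT.
exists (mu 1%:M * expR (limn (series a))).
move=> r r1; have [tau ->] := HC r r1.
rewrite /ordered_product.
have H0 := @mu_prod _ _ _ _ _ hmu r (fun j : 'I_r => A (sigma (p + tau j)%N)).
apply: (le_trans H0).
apply: ler_wpM2l => //.
set g := fun j : 'I_r => sigma (p + tau j)%N.
have ig : injective g.
  move=> i j /si /eqP; rewrite eqn_add2l => /eqP /val_inj; exact: perm_inj.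
set K := (\max_(j < r) g j).+1.
have gK : forall j, (g j < K)%N by move=> j; rewrite ltnS; exact: leq_bigmax.
set m := fun k => Num.max (mu (A k)) 1.
have m1 : forall k, 1 <= m k by move=> k; rewrite /m le_max lexx orbT.
apply: le_trans (_ : \prod_(j < r) m (g j) <= _).
  apply: ler_prod => j _; rewrite mu0 /= /m le_max lexx //.
apply: le_trans (@prod_inj_le _ _ _ _ _ ig gK m1) _.
apply: le_trans (_ : expR (series a K) <= _); last first.
  rewrite ler_expR; apply: nondecreasing_cvgn_le => //.
  exact: nondecreasing_series.
rewrite /series /= expR_sum; apply: ler_prod => k _.
rewrite (le_trans ler01 (m1 k)) /= -[m k](addrNK 1) addrC.
exact: expR_ge1Dx.
Qed.

Theorem proposition3p1 (R : realType) :
  general_products_bounded (fun x : R => `|x|%R) /\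
  general_products_bounded (@Normc.normc R).
Proof. split; exact: gpb. Qed.
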